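(* Let $d \ge 2$ be an integer. For $\nu > 0$ and $\alpha \ge 0$ let $g_1(\nu, \alpha; d) = \left(\nu + 1 + (d-1) \alpha \nu \right) e^{-\frac{\nu^2 + (d-1) \alpha^2}{2}}$, and define $$h_1(\nu;d) = (\nu+1)^2 + 4 \nu^2 (d-1), \qquad h_2(\nu;d) = \frac{(\nu + 1) \sqrt{h_1(\nu;d)} - (\nu+1)^2}{4 \nu^2 (d-1)} - \frac{1}{2},$$ $$g_2(\nu; d) = \frac{\nu + 1 + \sqrt{h_1(\nu;d)}}{2}\, e^{-\frac{\nu^2}{2} + h_2(\nu;d)}.$$ Then $g_1(\nu, \alpha; d) \le g_2(\nu; d)$ for all $\nu > 0$ and $\alpha \ge 0$. *)

(* Defs.v *)
From Stdlib Require Import Reals.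
Open Scope R_scope.

Definition g1 (nu alpha : R) (d : nat) : R :=
  (nu + 1 + (INR d - 1) * alpha * nu) *
  exp (- (nu ^ 2 + (INR d - 1) * alpha ^ 2) / 2).

Definition h1 (nu : R) (d : nat) : R :=
  (nu + 1) ^ 2 + 4 * nu ^ 2 * (INR d - 1).

Definition h2 (nu : R) (d : nat) : R :=
  ((nu + 1) * sqrt (h1 nu d) - (nu + 1) ^ 2) / (4 * nu ^ 2 * (INR d - 1)) - 1 / 2.

Definition g2 (nu : R) (d : nat) : R :=
  (nu + 1 + sqrt (h1 nu d)) / 2 * exp (- nu ^ 2 / 2 + h2 nu d).

(* Main.v *)
Require Import Defs.
From Stdlib Require Import Reals Lra.
Open Scope R_scope.

Theorem lemma3 (d : nat) (hd : (2 <= d)%nat) (nu alpha : R)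
  (hnu : 0 < nu) (halpha : 0 <= alpha) :
  g1 nu alpha d <= g2 nu d.
Proof.
  unfold g1, g2.
  assert (Hd : 2 <= INR d) by (apply (le_INR 2); exact hd).
  set (c := INR d - 1).
  assert (Hc : 1 <= c) by (unfold c; lra).
  set (s := sqrt (h1 nu d)).
  assert (Hh1 : 0 <= h1 nu d) by (unfold h1; fold c; nra).
  assert (Hs2 : s * s = (nu + 1) ^ 2 + 4 * nu ^ 2 * c).
  { unfold s; rewrite sqrt_sqrt; auto. }
  assert (Hs0 : 0 <= s) by (unfold s; apply sqrt_pos).
  assert (Hs : nu + 1 < s) by nra.
  set (a := (s - (nu + 1)) / (2 * nu * c)).
  assert (Hnc : 0 < 2 * nu * c) by nra.
  assert (Ha0 : 0 < a) by (unfold a; apply Rdiv_lt_0_compat; lra).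
  assert (Hq : c * nu * a ^ 2 = nu - (nu + 1) * a).
  { assert (Ha' : a * (2 * nu * c) = s - (nu + 1)) by (unfold a; field; lra).
    apply (Rmult_eq_reg_l (4 * nu * c)); [|nra].
    replace (4 * nu * c * (c * nu * a ^ 2)) with ((a * (2 * nu * c)) ^ 2) by ring.
    replace (4 * nu * c * (nu - (nu + 1) * a)) with (4 * nu * nu * c - 2 * (nu + 1) * (a * (2 * nu * c))) by ring.
    rewrite Ha'. nra. }
  assert (HM : (nu + 1 + s) / 2 = nu + 1 + c * nu * a).
  { unfold a. field. lra. }
  assert (Hexp : - nu ^ 2 / 2 + h2 nu d = - (nu ^ 2 + c * a ^ 2) / 2).
  { unfold h2; fold c s.
    replace (((nu + 1) * s - (nu + 1) ^ 2) / (4 * nu ^ 2 * c))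
      with ((nu + 1) * a / (2 * nu)) by (unfold a; field; lra).
    apply (Rmult_eq_reg_l (2 * nu)); [|lra].
    field_simplify; [|lra]. nra. }
  rewrite Hexp, HM.
  set (M := nu + 1 + c * nu * a).
  assert (HMp : 0 < M) by (unfold M; nra).
  set (L := nu + 1 + c * alpha * nu).
  assert (HBM : c * nu = c * a * M) by (unfold M; nra).
  assert (HL : L <= M * exp (c * a * (alpha - a))).
  { pose proof (exp_ineq1_le (c * a * (alpha - a))) as He.
    assert (L = M + c * a * M * (alpha - a)) by (unfold L; rewrite <- HBM; unfold M; ring).
    rewrite H. replace (M + c * a * M * (alpha - a)) with (M * (1 + c * a * (alpha - a))) by ring.
    apply Rmult_le_compat_l; lra. }
  apply Rle_trans with (M * exp (c * a * (alpha - a)) * exp (- (nu ^ 2 + c * alpha ^ 2) / 2)).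
  { apply Rmult_le_compat_r; [left; apply exp_pos | exact HL]. }
  rewrite Rmult_assoc, <- exp_plus.
  apply Rmult_le_compat_l; [lra|].
  assert (Hle : c * a * (alpha - a) + - (nu ^ 2 + c * alpha ^ 2) / 2 <= - (nu ^ 2 + c * a ^ 2) / 2).
  { assert (0 <= c * (alpha - a) ^ 2) by (apply Rmult_le_pos; [lra | apply pow2_ge_0]).
    assert (- (nu ^ 2 + c * a ^ 2) / 2 - (c * a * (alpha - a) + - (nu ^ 2 + c * alpha ^ 2) / 2) = c * (alpha - a) ^ 2 / 2) by field.
    lra. }
  destruct (Rle_lt_or_eq_dec _ _ Hle) as [Hlt|Heq].
  - left; apply exp_increasing; exact Hlt.
  - rewrite Heq; right; reflexivity.
Qed.
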